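(* For every constant $0<\delta<1/\mathrm{e}$ there exist a constant $c>0$ and $k_0$ such that for all $k\ge k_0$, when $k$ nodes of a one-hop radio network without collision detection all receive a message at time $0$ and each runs protocol Exp Back-on/Back-off with parameter $\delta$, all $k$ messages are delivered within $4(1+1/\delta)k$ communication steps with probability at least $1-1/k^{c}$.
   Context: Model (one-hop Radio Network without collision detection): time is divided into synchronous communication steps. A node holding an undelivered message is active. In each step each active node may transmit. If exactly one node transmits, its message is delivered and that node becomes idle, never transmitting again. If zero or at least two nodes transmit, nobody receives anything, and nodes cannot distinguish these cases. Nodes know neither $k$ nor the total number of nodes. All $k$ nodes start simultaneously. Protocol Exp Back-on/Back-off with parameter $\delta$: all nodes use the same common sequence of consecutive windows of time steps. For $i=1,2,\dots$ (a phase), set $w\leftarrow2^i$; while $w\ge1$: the next window consists of the next $w$ steps (with $w$ rounded to an integer), each still-active node chooses one step of this window uniformly at random, independently of the others, and transmits in that step only; then $w\leftarrow w(1-\delta)$. *)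

(* Defs.v *)
From Stdlib Require Import Reals List Arith ZArith Bool.
Import ListNotations.
Open Scope R_scope.

(* floor of a real as a nat (Int_part r = up r - 1 is the floor). *)
Definition nfloor (r : R) : nat := Z.to_nat (Int_part r).

(* Windows of one phase, starting from real size w:
   while w >= 1, emit a window of length floor(w), then w <- w(1-delta).
   [fuel] bounds the number of windows; it is only used with a fuel that is
   at least the number of steps under consideration (every window has >= 1
   step), so truncation never affects the first [fuel] steps. *)
Fixpoint phase_windows (delta w : R) (fuel : nat) : list nat :=
  match fuel with
  | O => []
  | S f => if Rle_dec 1 w then nfloor w :: phase_windows delta (w * (1 - delta)) f
           else []
  end.

(* Common window schedule restricted to what matters for the first T steps:
   phases i = 1..T (each phase has >= 1 step), each with w starting at 2^i. *)
Definition schedule (delta : R) (T : nat) : list nat :=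
  flat_map (fun i => phase_windows delta (2 ^ i) T) (seq 1 T).

(* All choice vectors of m active nodes, each picking a step in {0..w-1};
   there are w^m of them, each equally likely. *)
Fixpoint choices (m w : nat) : list (list nat) :=
  match m with
  | O => [[]]
  | S m' => flat_map (fun c => map (fun x => x :: c) (seq 0 w)) (choices m' w)
  end.

Definition avg {A : Type} (f : A -> R) (L : list A) : R :=
  fold_right Rplus 0 (map f L) / INR (length L).

(* Number of nodes whose chosen step is < r and is chosen by no other node
   (exactly one transmitter => delivered). *)
Definition singles (c : list nat) (r : nat) : nat :=
  length (filter (fun x => andb (Nat.ltb x r) (Nat.eqb (count_occ Nat.eq_dec c x) 1)) c).

(* Probability that m active nodes, facing remaining windows ws, all get
   delivered within the remaining r steps. *)
Fixpoint succ_prob (ws : list nat) (m r : nat) : R :=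
  match m with
  | O => 1
  | S _ =>
    match ws with
    | [] => 0
    | w :: ws' =>
      if Nat.leb r w then
        avg (fun c => if Nat.eqb (singles c r) m then 1 else 0) (choices m w)
      else
        avg (fun c => succ_prob ws' (m - singles c w) (r - w)) (choices m w)
    end
  end.

(* Number of steps in the deadline 4(1+1/delta)k (steps 1..floor of it). *)
Definition deadline (delta : R) (k : nat) : nat :=
  nfloor (4 * (1 + 1 / delta) * INR k).

Definition all_delivered_prob (delta : R) (k : nat) : R :=
  succ_prob (schedule delta (deadline delta k)) k (deadline delta k).

(* Main.v *)
Require Import Defs.
From Stdlib Require Import Reals Lra Lia List Arith Bool ZArith.
Import ListNotations.
Open Scope R_scope.


Definition sumR {A : Type} (f : A -> R) (L : list A) : R :=
  fold_right Rplus 0 (map f L).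

Lemma sumR_nil {A} (f : A -> R) : sumR f [] = 0.
Proof. reflexivity. Qed.
Lemma sumR_cons {A} (f : A -> R) a L : sumR f (a :: L) = f a + sumR f L.
Proof. reflexivity. Qed.
Lemma sumR_app {A} (f : A -> R) L1 L2 : sumR f (L1 ++ L2) = sumR f L1 + sumR f L2.
Proof. induction L1; unfold sumR in *; simpl; [ring|]. rewrite IHL1; ring. Qed.
Lemma sumR_map {A B} (f : B -> R) (g : A -> B) L : sumR f (map g L) = sumR (fun x => f (g x)) L.
Proof. unfold sumR; rewrite map_map; reflexivity. Qed.
Lemma sumR_flat_map {A B} (f : B -> R) (g : A -> list B) L :
  sumR f (flat_map g L) = sumR (fun x => sumR f (g x)) L.
Proof. induction L; simpl; [reflexivity|]. rewrite sumR_app, sumR_cons, IHL; reflexivity. Qed.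
Lemma sumR_ext_in {A} (f g : A -> R) L : (forall x, In x L -> f x = g x) -> sumR f L = sumR g L.
Proof. induction L; intros H; [reflexivity|]. rewrite !sumR_cons, H, IHL; auto; [intros; apply H|]; simpl; auto. Qed.
Lemma sumR_le {A} (f g : A -> R) L : (forall x, In x L -> f x <= g x) -> sumR f L <= sumR g L.
Proof. induction L; intros H; [unfold sumR; simpl; lra|]. rewrite !sumR_cons.
 assert (f a <= g a) by (apply H; simpl; auto). assert (sumR f L <= sumR g L) by (apply IHL; intros; apply H; simpl; auto). lra. Qed.
Lemma sumR_plus {A} (f g : A -> R) L : sumR (fun x => f x + g x) L = sumR f L + sumR g L.
Proof. induction L; [unfold sumR; simpl; ring|]. rewrite !sumR_cons, IHL; ring. Qed.
Lemma sumR_scal {A} (f : A -> R) c L : sumR (fun x => c * f x) L = c * sumR f L.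
Proof. induction L; [unfold sumR; simpl; ring|]. rewrite !sumR_cons, IHL; ring. Qed.
Lemma sumR_const {A} c (L : list A) : sumR (fun _ => c) L = c * INR (length L).
Proof. induction L; [unfold sumR; simpl; ring|]. rewrite sumR_cons, IHL; simpl length; rewrite S_INR; ring. Qed.
Lemma sumR_delta (x : nat) (v : R) L :
  sumR (fun y => if Nat.eqb y x then v else 0) L = INR (count_occ Nat.eq_dec L x) * v.
Proof. induction L; [unfold sumR; simpl; ring|]. rewrite sumR_cons, IHL. simpl.
 destruct (Nat.eq_dec a x) as [e|n].
 - subst. rewrite Nat.eqb_refl, S_INR. ring.
 - apply Nat.eqb_neq in n. rewrite n. ring. Qed.
Lemma count_seq x w : (x < w)%nat -> count_occ Nat.eq_dec (seq 0 w) x = 1%nat.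
Proof. intros H. assert (NoDup (seq 0 w)) by apply seq_NoDup.
 apply (proj1 (NoDup_count_occ' Nat.eq_dec _)) with (x := x) in H0; auto.
 apply in_seq; lia. Qed.

Lemma avg_sumR {A} (f : A -> R) L : avg f L = sumR f L / INR (length L).
Proof. reflexivity. Qed.

Lemma choices_S m w : choices (S m) w = flat_map (fun c => map (fun x => x :: c) (seq 0 w)) (choices m w).
Proof. reflexivity. Qed.
Lemma length_choices m w : length (choices m w) = (w ^ m)%nat.
Proof. induction m; [reflexivity|]. rewrite choices_S.
 assert (forall L : list (list nat), length (flat_map (fun c => map (fun x => x :: c) (seq 0 w)) L) = (w * length L)%nat).
 { induction L; simpl; [lia|]. rewrite length_app, length_map, length_seq, IHL. lia. }
 rewrite H, IHm. simpl. lia. Qed.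
Lemma in_choices m w c : In c (choices m w) -> length c = m /\ (forall y, In y c -> (y < w)%nat).
Proof. revert c; induction m; intros c H.
 - simpl in H. destruct H as [<-|[]]. split; [reflexivity| intros y []].
 - rewrite choices_S in H. apply in_flat_map in H. destruct H as [c' [H1 H2]].
   apply in_map_iff in H2. destruct H2 as [x [<- Hx]]. apply in_seq in Hx.
   destruct (IHm c' H1) as [Hl Hy]. split; [simpl; lia|]. intros y [<-|Hy']; [lia|auto]. Qed.
Lemma sumR_choices_S {f : list nat -> R} m w :
  sumR f (choices (S m) w) = sumR (fun c => sumR (fun x => f (x :: c)) (seq 0 w)) (choices m w).
Proof. rewrite choices_S, sumR_flat_map. apply sumR_ext_in; intros; rewrite sumR_map; reflexivity. Qed.


Definition cnt (c : list nat) (y : nat) : nat := count_occ Nat.eq_dec c y.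
Definition ind (j : nat) (c : list nat) (y : nat) : R := if Nat.eqb (cnt c y) j then 1 else 0.
Definition sR (w : nat) (c : list nat) : R := sumR (ind 1 c) (seq 0 w).
Definition zR (w : nat) (c : list nat) : R := sumR (ind 0 c) (seq 0 w).

Lemma cnt_cons x c y : cnt (x :: c) y = (if Nat.eqb x y then S (cnt c y) else cnt c y).
Proof. unfold cnt; simpl. destruct (Nat.eq_dec x y) as [e|n].
 - subst; rewrite Nat.eqb_refl; reflexivity.
 - apply Nat.eqb_neq in n; rewrite n; reflexivity. Qed.

Lemma filter_count w (p : nat -> bool) (l : list nat) :
  (forall y, In y l -> (y < w)%nat) ->
  INR (length (filter p l)) = sumR (fun y => if p y then INR (cnt l y) else 0) (seq 0 w).
Proof.
  induction l as [|a l IH]; intros Hl.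
  - simpl. rewrite (sumR_ext_in _ (fun _ => 0)); [rewrite sumR_const; ring|].
    intros y _; unfold cnt; simpl; destruct (p y); reflexivity.
  - rewrite (sumR_ext_in _ (fun y => (if p y then INR (cnt l y) else 0) +
                                    (if Nat.eqb y a then (if p a then 1 else 0) else 0))).
    + rewrite sumR_plus, sumR_delta, <- IH by (intros; apply Hl; simpl; auto).
      rewrite count_seq by (apply Hl; simpl; auto). simpl.
      destruct (p a); simpl length; rewrite ?S_INR; try ring.
    + intros y _. rewrite cnt_cons. destruct (Nat.eqb a y) eqn:E.
      * apply Nat.eqb_eq in E; subst. rewrite Nat.eqb_refl. destruct (p y); [rewrite S_INR|]; ring.
      * assert (Nat.eqb y a = false) by (rewrite Nat.eqb_sym; auto). rewrite H. ring.
Qed.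

Lemma singles_sR c w : (forall y, In y c -> (y < w)%nat) -> INR (singles c w) = sR w c.
Proof.
  intros H. unfold singles. rewrite (filter_count w) by auto. unfold sR.
  apply sumR_ext_in. intros y Hy. apply in_seq in Hy.
  assert (Nat.ltb y w = true) by (apply Nat.ltb_lt; lia). rewrite H0; simpl.
  unfold ind. fold (cnt c y). destruct (Nat.eqb (cnt c y) 1) eqn:E; [apply Nat.eqb_eq in E; rewrite E|]; simpl; ring.
Qed.

Lemma singles_le c w : (singles c w <= length c)%nat.
Proof. unfold singles. apply filter_length_le. Qed.

Lemma ind_cases c x : (ind 0 c x = 1 /\ ind 1 c x = 0) \/ (ind 0 c x = 0 /\ ind 1 c x = 1) \/ (ind 0 c x = 0 /\ ind 1 c x = 0).
Proof. unfold ind. destruct (cnt c x) as [|[|n]]; simpl; auto. Qed.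

Lemma ind_update j c x w : (x < w)%nat ->
  sumR (ind j (x :: c)) (seq 0 w) = sumR (ind j c) (seq 0 w) + (ind j (x :: c) x - ind j c x).
Proof.
  intros Hx.
  rewrite (sumR_ext_in (ind j (x :: c)) (fun y => ind j c y + (if Nat.eqb y x then (ind j (x :: c) x - ind j c x) else 0))).
  - rewrite sumR_plus, sumR_delta, count_seq by auto. simpl; ring.
  - intros y _. destruct (Nat.eqb y x) eqn:E.
    + apply Nat.eqb_eq in E; subst; ring.
    + unfold ind at 1. rewrite cnt_cons. rewrite (Nat.eqb_sym x y), E. unfold ind; ring.
Qed.

Lemma sR_cons w c x : (x < w)%nat -> sR w (x :: c) = sR w c + ind 0 c x - ind 1 c x.
Proof. intros H. unfold sR. rewrite ind_update by auto.
 unfold ind. rewrite cnt_cons, Nat.eqb_refl. destruct (cnt c x) as [|[|n]]; simpl; ring. Qed.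
Lemma zR_cons w c x : (x < w)%nat -> zR w (x :: c) = zR w c - ind 0 c x.
Proof. intros H. unfold zR. rewrite ind_update by auto.
 unfold ind. rewrite cnt_cons, Nat.eqb_refl. destruct (cnt c x) as [|[|n]]; simpl; ring. Qed.

Lemma sum_lin w c a b d :
  sumR (fun x => a + b * ind 0 c x + d * ind 1 c x) (seq 0 w) = a * INR w + b * zR w c + d * sR w c.
Proof. rewrite !sumR_plus, !sumR_scal, sumR_const, length_seq. unfold zR, sR; ring. Qed.

Lemma sum_x_gen w c (f : list nat -> R) a b d :
  (forall x, (x < w)%nat -> f (x :: c) = a + b * ind 0 c x + d * ind 1 c x) ->
  sumR (fun x => f (x :: c)) (seq 0 w) = a * INR w + b * zR w c + d * sR w c.
Proof. intros H. rewrite <- sum_lin. apply sumR_ext_in. intros x Hx; apply in_seq in Hx; apply H; lia. Qed.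

Ltac indcase c x := destruct (ind_cases c x) as [[-> ->]|[[-> ->]|[-> ->]]]; ring.

Section Moments.
Variable w : nat.
Let W := INR w.
Definition Sm (g : list nat -> R) (m : nat) := sumR g (choices m w).

Lemma Sm_S g m : Sm g (S m) = Sm (fun c => sumR (fun x => g (x :: c)) (seq 0 w)) m.
Proof. unfold Sm. apply sumR_choices_S. Qed.

Lemma Sm_lin (f g : list nat -> R) a b m : (forall c, f c = a * g c + b) -> Sm f m = a * Sm g m + b * W ^ m.
Proof. intros H. unfold Sm. rewrite (sumR_ext_in _ (fun c => a * g c + b)) by auto.
 rewrite sumR_plus, sumR_scal, sumR_const, length_choices, pow_INR. fold W. ring. Qed.

Definition S1f (m : nat) : R := match m with O => 0 | S n => INR (S n) * W * (W - 1) ^ n end.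
Definition SZf (m : nat) : R := match m with O => 0 | S n => INR (S n) * W * (W - 1) * (W - 2) ^ n end.
Definition S2f (m : nat) : R := match m with O => 0 | S O => W
  | S (S n) => INR (S (S n)) * W * (W - 1) ^ (S n) + (W - 1) * INR (S (S n)) * INR (S n) * W * (W - 2) ^ n end.

Lemma moments m :
  Sm (zR w) m = W * (W - 1) ^ m /\
  Sm (fun c => zR w c * zR w c) m = W * (W - 1) * (W - 2) ^ m + W * (W - 1) ^ m /\
  Sm (sR w) m = S1f m /\
  Sm (fun c => sR w c * zR w c) m = SZf m /\
  Sm (fun c => sR w c * sR w c) m = S2f m.
Proof.
  induction m as [|m [H1 [H2 [H3 [H4 H5]]]]].
  - unfold Sm; simpl. unfold sumR; simpl.
    assert (zR w [] = W) by (unfold zR; rewrite (sumR_ext_in _ (fun _ => 1)) by (intros; reflexivity); rewrite sumR_const, length_seq; fold W; ring).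
    assert (sR w [] = 0) by (unfold sR; rewrite (sumR_ext_in _ (fun _ => 0)) by (intros; reflexivity); rewrite sumR_const; ring).
    rewrite H, H0. repeat split; ring.
  - rewrite !Sm_S.
    assert (E1 : forall c, sumR (fun x => zR w (x :: c)) (seq 0 w) = (W - 1) * zR w c).
    { intros c. transitivity ((zR w c) * INR w + (-1) * zR w c + 0 * sR w c); [|fold W; ring]. rewrite <- sum_lin. apply sumR_ext_in; intros x Hx; apply in_seq in Hx; rewrite zR_cons by lia; ring. }
    assert (E2 : forall c, sumR (fun x => zR w (x :: c) * zR w (x :: c)) (seq 0 w) = (W - 2) * (zR w c * zR w c) + zR w c).
    { intros c. transitivity ((zR w c * zR w c) * INR w + (1 - 2 * zR w c) * zR w c + 0 * sR w c); [|fold W; ring]. rewrite <- sum_lin. apply sumR_ext_in; intros x Hx; apply in_seq in Hx; rewrite zR_cons by lia; indcase c x. }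
    assert (E3 : forall c, sumR (fun x => sR w (x :: c)) (seq 0 w) = (W - 1) * sR w c + zR w c).
    { intros c. transitivity ((sR w c) * INR w + 1 * zR w c + (-1) * sR w c); [|fold W; ring]. rewrite <- sum_lin. apply sumR_ext_in; intros x Hx; apply in_seq in Hx; rewrite sR_cons by lia; ring. }
    assert (E4 : forall c, sumR (fun x => sR w (x :: c) * zR w (x :: c)) (seq 0 w) = (W - 2) * (sR w c * zR w c) + zR w c * zR w c - zR w c).
    { intros c. transitivity ((sR w c * zR w c) * INR w + (zR w c - sR w c - 1) * zR w c + (- zR w c) * sR w c); [|fold W; ring]. rewrite <- sum_lin. apply sumR_ext_in; intros x Hx; apply in_seq in Hx; rewrite sR_cons, zR_cons by lia; indcase c x. }
    assert (E5 : forall c, sumR (fun x => sR w (x :: c) * sR w (x :: c)) (seq 0 w) = (W - 2) * (sR w c * sR w c) + 2 * (sR w c * zR w c) + zR w c + sR w c).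
    { intros c. transitivity ((sR w c * sR w c) * INR w + (1 + 2 * sR w c) * zR w c + (1 - 2 * sR w c) * sR w c); [|fold W; ring]. rewrite <- sum_lin. apply sumR_ext_in; intros x Hx; apply in_seq in Hx; rewrite sR_cons by lia; indcase c x. }
    unfold Sm in *.
    assert (L4 : forall (f g h k : list nat -> R) (a b d e : R) m0,
      sumR (fun c => a * f c + b * g c + d * h c + e * k c) (choices m0 w) =
      a * sumR f (choices m0 w) + b * sumR g (choices m0 w) + d * sumR h (choices m0 w) + e * sumR k (choices m0 w)).
    { intros. rewrite !sumR_plus, !sumR_scal. ring. }
    repeat split.
    + rewrite (sumR_ext_in _ (fun c => (W - 1) * zR w c + 0 * zR w c + 0 * zR w c + 0 * zR w c)) by (intros; rewrite E1; ring).
      rewrite L4, H1. simpl; ring.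
    + rewrite (sumR_ext_in _ (fun c => (W - 2) * (zR w c * zR w c) + 1 * zR w c + 0 * zR w c + 0 * zR w c)) by (intros; rewrite E2; ring).
      rewrite L4, H1, H2. simpl; ring.
    + rewrite (sumR_ext_in _ (fun c => (W - 1) * sR w c + 1 * zR w c + 0 * zR w c + 0 * zR w c)) by (intros; rewrite E3; ring).
      rewrite L4, H1, H3. destruct m; simpl S1f; rewrite ?S_INR; simpl; ring.
    + rewrite (sumR_ext_in _ (fun c => (W - 2) * (sR w c * zR w c) + 1 * (zR w c * zR w c) + (-1) * zR w c + 0 * zR w c)) by (intros; rewrite E4; ring).
      rewrite L4, H1, H2, H4. destruct m; simpl; rewrite ?S_INR; simpl; ring.
    + rewrite (sumR_ext_in _ (fun c => (W - 2) * (sR w c * sR w c) + 2 * (sR w c * zR w c) + 1 * zR w c + 1 * sR w c)) by (intros; rewrite E5; ring).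
      rewrite L4, H1, H3, H4, H5. destruct m as [|[|m]]; simpl; rewrite ?S_INR; simpl; ring.
Qed.
End Moments.


Lemma avg_le {A} (f g : A -> R) L : (forall x, In x L -> f x <= g x) -> avg f L <= avg g L.
Proof. intros H. rewrite !avg_sumR. unfold Rdiv. apply Rmult_le_compat_r.
 - destruct (length L); [simpl INR; rewrite Rinv_0; lra|]. left; apply Rinv_0_lt_compat, lt_0_INR; lia.
 - apply sumR_le; auto. Qed.

Lemma avg_choices g m w : avg g (choices m w) = Sm w g m / INR w ^ m.
Proof. rewrite avg_sumR, length_choices, pow_INR. reflexivity. Qed.

Definition mu (w m : nat) : R := S1f w m / INR w ^ m.

Definition prob_bad (m w : nat) (T : R) : R :=
  avg (fun c => if Rle_dec (INR (m - singles c w)) T then 0 else 1) (choices m w).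

Lemma Sm_const w m a : Sm w (fun _ => a) m = a * INR w ^ m.
Proof. unfold Sm. rewrite sumR_const, length_choices, pow_INR. ring. Qed.

Lemma X_eq m w c : In c (choices m w) -> INR (m - singles c w) = INR m - sR w c.
Proof. intros H. destruct (in_choices _ _ _ H) as [Hl Hy].
 rewrite minus_INR by (rewrite <- Hl; apply singles_le). rewrite singles_sR by auto. reflexivity. Qed.

Lemma mu_S w n : (1 <= w)%nat -> mu w (S n) = INR (S n) * ((INR w - 1) / INR w) ^ n.
Proof. intros Hw. unfold mu, S1f. assert (0 < INR w) by (apply lt_0_INR; lia).
 unfold Rdiv. rewrite Rpow_mult_distr, pow_inv. simpl. field. split; [apply pow_nonzero|]; lra. Qed.

Lemma mu_0 w : mu w 0 = 0.
Proof. unfold mu; simpl. lra. Qed.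

Lemma var_expr w n : (2 <= w)%nat ->
  let Q := (INR w - 1) / INR w in let P := (INR w - 2) / INR w in
  S2f w (S (S n)) / INR w ^ (S (S n)) - (mu w (S (S n))) ^ 2 =
  INR (S (S n)) * Q * Q ^ n + Q * INR (S (S n)) * INR (S n) * P ^ n - (INR (S (S n)) * Q * Q ^ n) ^ 2.
Proof. intros Hw Q P. assert (0 < INR w) by (apply lt_0_INR; lia).
 rewrite mu_S by lia. fold Q. unfold S2f.
 assert (E1 : INR w - 1 = Q * INR w) by (unfold Q; field; lra).
 assert (E2 : INR w - 2 = P * INR w) by (unfold P; field; lra).
 rewrite E2, E1.
 rewrite !Rpow_mult_distr. simpl. field. split; [apply pow_nonzero|]; lra. Qed.

Lemma pow_le_one x n : 0 <= x <= 1 -> x ^ n <= 1.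
Proof. intros H. induction n; simpl; [lra|]. assert (0 <= x ^ n) by (apply pow_le; lra). nra. Qed.

Lemma var_bound w m : (2 <= w)%nat ->
  S2f w m / INR w ^ m - (mu w m) ^ 2 <= INR m + INR m ^ 2 / INR w.
Proof.
  intros Hw. assert (HW : 2 <= INR w) by (apply (le_INR 2); lia).
  assert (0 <= INR m) by apply pos_INR. assert (0 <= INR m ^ 2 / INR w) by (unfold Rdiv; apply Rmult_le_pos; [nra|left; apply Rinv_0_lt_compat; lra]).
  destruct m as [|[|n]].
  - rewrite mu_0. simpl. lra.
  - apply Rle_trans with 0; [|lra]. rewrite mu_S by lia. simpl S2f. simpl. replace (INR w / (INR w * 1)) with 1 by (field; lra). lra.
  - rewrite var_expr by auto.
    set (Q := (INR w - 1) / INR w). set (P := (INR w - 2) / INR w).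
    assert (HQ : Q = 1 - / INR w) by (unfold Q; field; lra).
    assert (HP : P = 1 - 2 / INR w) by (unfold P; field; lra).
    assert (0 < / INR w <= /2) by (split; [apply Rinv_0_lt_compat; lra| apply Rinv_le_contravar; lra]).
    assert (HQ0 : 0 <= Q <= 1) by lra.
    assert (HP0 : 0 <= P <= Q * Q) by (rewrite HP, HQ; unfold Rdiv; nra).
    assert (HPn : P ^ n <= (Q ^ n) ^ 2) by (rewrite <- pow_mult, Nat.mul_comm, pow_mult; apply pow_incr; nra).
    assert (HPn0 : 0 <= P ^ n) by (apply pow_le; lra).
    assert (HQn : 0 <= Q ^ n <= 1) by (split; [apply pow_le; lra| apply pow_le_one; lra]).
    set (M := INR (S (S n))). assert (HM : M = INR (S n) + 1) by (unfold M; rewrite S_INR; ring).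
    assert (1 <= INR (S n)) by (rewrite S_INR; pose proof (pos_INR n); lra).
    set (X := Q ^ n) in *. set (Y := P ^ n) in *.
    assert (E1 : Q * M * INR (S n) * Y <= Q * M * INR (S n) * X ^ 2).
    { apply Rmult_le_compat_l; [|lra]. apply Rmult_le_pos; [|lra]. apply Rmult_le_pos; lra. }
    assert (E2 : M * Q * X <= M) by (assert (Q * X <= 1) by nra; nra).
    assert (E3 : Q * M * INR (S n) * X ^ 2 - (M * Q * X) ^ 2 <= M ^ 2 / INR w).
    { replace (Q * M * INR (S n) * X ^ 2 - (M * Q * X) ^ 2) with (M * Q * X ^ 2 * (M * (1 - Q) - 1)) by (rewrite HM; ring).
      replace (M ^ 2 / INR w) with (M * M * (1 - Q)) by (rewrite HQ; field; lra).
      assert (0 <= M * Q * X ^ 2 <= M) by (split; [apply Rmult_le_pos; nra|]; assert (Q * X^2 <= 1) by nra; nra).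
      assert (0 <= 1 - Q) by lra. set (K := M * Q * X ^ 2) in *.
      assert (K * (M * (1 - Q) - 1) <= K * (M * (1 - Q))) by nra.
      assert (K * (M * (1 - Q)) <= M * (M * (1 - Q))) by (apply Rmult_le_compat_r; nra). nra. }
    lra.
Qed.

Lemma exp_pow x n : exp x ^ n = exp (INR n * x).
Proof. induction n; simpl pow. - simpl; rewrite Rmult_0_l, exp_0; ring.
 - rewrite IHn, S_INR, <- exp_plus. f_equal; ring. Qed.
Lemma exp_le_mono x y : x <= y -> exp x <= exp y.
Proof. intros [H|H]; [left; apply exp_increasing; auto| subst; lra]. Qed.

Lemma bernoulli x n : -1 <= x -> 1 + INR n * x <= (1 + x) ^ n.
Proof. intros H. induction n; [simpl; lra|]. rewrite S_INR; simpl pow.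
 assert (0 <= 1 + x) by lra. assert (0 <= INR n) by apply pos_INR.
 assert ((1 + x) * (1 + INR n * x) <= (1 + x) * (1 + x) ^ n) by (apply Rmult_le_compat_l; lra).
 assert (0 <= INR n * x * x) by (rewrite Rmult_assoc; apply Rmult_le_pos; nra) ; nra. Qed.

Lemma Sm_s w m : Sm w (sR w) m = mu w m * INR w ^ m.
Proof. destruct (moments w m) as [_ [_ [H _]]]. rewrite H. unfold mu.
 destruct (Req_dec (INR w ^ m) 0) as [E|E]; [| field; auto].
 destruct w; [|exfalso; revert E; apply pow_nonzero; apply not_0_INR; lia].
 destruct m; simpl in *; [lra|]. unfold S1f; simpl; ring. Qed.

Lemma window_cheb w m T d : (2 <= w)%nat -> 0 < d -> INR m - mu w m + d <= T ->
  prob_bad m w T <= (INR m + INR m ^ 2 / INR w) / d ^ 2.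
Proof.
  intros Hw Hd HT. assert (HW : 2 <= INR w) by (apply (le_INR 2); lia).
  assert (HN : 0 < INR w ^ m) by (apply pow_lt; lra).
  unfold prob_bad. set (u := mu w m) in *.
  apply Rle_trans with (avg (fun c => (sR w c - u) ^ 2 / d ^ 2) (choices m w)).
  - apply avg_le. intros c Hc. rewrite X_eq by auto.
    assert (0 < d ^ 2) by (apply pow_lt; lra).
    destruct (Rle_dec (INR m - sR w c) T).
    + apply Rmult_le_pos; [apply pow2_ge_0| left; apply Rinv_0_lt_compat; auto].
    + apply (Rmult_le_reg_r (d ^ 2)); auto. unfold Rdiv; rewrite Rmult_assoc, Rinv_l by lra. assert (u - sR w c > d) by lra. simpl pow. rewrite !Rmult_1_r, Rmult_1_l. replace (sR w c - u) with (-(u - sR w c)) by ring. replace (- (u - sR w c) * - (u - sR w c)) with ((u - sR w c) * (u - sR w c)) by ring. apply Rmult_le_compat; lra.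
  - rewrite avg_choices. unfold Sm.
    rewrite (sumR_ext_in _ (fun c => (/ d ^ 2) * (sR w c * sR w c) + (- 2 * u / d ^ 2) * sR w c + u ^ 2 / d ^ 2))
      by (intros; field; lra).
    rewrite !sumR_plus, !sumR_scal, sumR_const, length_choices, pow_INR.
    fold (Sm w (fun c => sR w c * sR w c) m). fold (Sm w (sR w) m). rewrite Sm_s.
    destruct (moments w m) as [_ [_ [_ [_ H5]]]]. rewrite H5. fold u.
    pose proof (var_bound w m Hw). fold u in H.
    assert (0 < d ^ 2) by (apply pow_lt; lra).
    replace ((/ d ^ 2 * S2f w m + - 2 * u / d ^ 2 * (u * INR w ^ m) + u ^ 2 / d ^ 2 * INR w ^ m) / INR w ^ m)
      with ((S2f w m / INR w ^ m - u ^ 2) / d ^ 2) by (field; lra).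
    unfold Rdiv at 1 3. apply Rmult_le_compat_r; [left; apply Rinv_0_lt_compat; auto| lra].
Qed.

Lemma window_markov w m : (2 <= w)%nat -> prob_bad m w 0 <= INR m - mu w m.
Proof.
  intros Hw. assert (HW : 2 <= INR w) by (apply (le_INR 2); lia).
  assert (HN : 0 < INR w ^ m) by (apply pow_lt; lra).
  unfold prob_bad.
  apply Rle_trans with (avg (fun c => INR m - sR w c) (choices m w)).
  - apply avg_le. intros c Hc. rewrite <- X_eq by auto.
    destruct (Rle_dec (INR (m - singles c w)) 0); [apply pos_INR|].
    destruct (m - singles c w)%nat; [simpl in n; lra| rewrite S_INR; pose proof (pos_INR n0); lra].
  - rewrite avg_choices. unfold Sm.
    rewrite (sumR_ext_in _ (fun c => (-1) * sR w c + INR m)) by (intros; ring).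
    rewrite sumR_plus, sumR_scal, sumR_const, length_choices, pow_INR.
    fold (Sm w (sR w) m). rewrite Sm_s. right; field; lra.
Qed.

Lemma mean_bound1 w m rb : (2 <= w)%nat -> INR m <= rb * (INR w - 1) ->
  INR m - mu w m <= INR m * (1 - exp (- rb)).
Proof.
  intros Hw Hm. assert (HW : 2 <= INR w) by (apply (le_INR 2); lia).
  destruct m as [|n]; [rewrite mu_0; simpl; lra|].
  rewrite mu_S by lia. set (Q := (INR w - 1) / INR w).
  assert (HQ : exp (- (/ (INR w - 1))) <= Q).
  { rewrite exp_Ropp. pose proof (exp_ineq1_le (/ (INR w - 1))).
    assert (0 < / (INR w - 1)) by (apply Rinv_0_lt_compat; lra).
    unfold Q. apply (Rmult_le_reg_l (exp (/ (INR w - 1)))); [apply exp_pos|].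
    rewrite Rinv_r by (apply Rgt_not_eq, exp_pos).
    apply Rle_trans with ((1 + / (INR w - 1)) * ((INR w - 1) / INR w)).
    - right; field; lra.
    - apply Rmult_le_compat_r; [unfold Rdiv; apply Rmult_le_pos; [lra|left; apply Rinv_0_lt_compat; lra]| lra]. }
  assert (Hn : exp (- rb) <= Q ^ n).
  { apply Rle_trans with (exp (- (/ (INR w - 1))) ^ n); [|apply pow_incr; split; [left; apply exp_pos|auto]].
    rewrite exp_pow. apply exp_le_mono.
    assert (INR n <= rb * (INR w - 1)) by (rewrite S_INR in Hm; lra).
    apply (Rmult_le_reg_r (INR w - 1)); [lra|].
    replace (INR n * - / (INR w - 1) * (INR w - 1)) with (- INR n) by (field; lra). lra. }
  assert (0 <= INR (S n)) by apply pos_INR. nra.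
Qed.

Lemma mean_bound2 w m : (2 <= w)%nat -> INR m - mu w m <= INR m ^ 2 / INR w.
Proof.
  intros Hw. assert (HW : 2 <= INR w) by (apply (le_INR 2); lia).
  destruct m as [|n]; [rewrite mu_0; simpl; unfold Rdiv; rewrite Rmult_0_l, Rmult_0_l; lra|].
  rewrite mu_S by lia.
  assert (HB : 1 + INR n * (- / INR w) <= ((INR w - 1) / INR w) ^ n).
  { replace ((INR w - 1) / INR w) with (1 + - / INR w) by (field; lra). apply bernoulli.
    assert (/ INR w <= 1) by (rewrite <- Rinv_1; apply Rinv_le_contravar; lra). lra. }
  assert (0 <= INR (S n)) by apply pos_INR. rewrite S_INR in *.
  assert (INR n <= INR n + 1) by lra. pose proof (pos_INR n).
  assert (0 < / INR w) by (apply Rinv_0_lt_compat; lra).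
  apply Rle_trans with ((INR n + 1) * (INR n * / INR w)); [nra|].
  unfold Rdiv. assert (INR n * / INR w <= (INR n + 1) * / INR w) by nra. nra.
Qed.


Lemma avg_lin {A} (f : A -> R) a L : (0 < length L)%nat -> avg (fun x => a - f x) L = a - avg f L.
Proof. intros H. rewrite !avg_sumR. rewrite (sumR_ext_in _ (fun x => a + (-1) * f x)) by (intros; ring).
 rewrite sumR_plus, sumR_scal, sumR_const. assert (0 < INR (length L)) by (apply lt_0_INR; auto). field; lra. Qed.

Lemma avg_ge {A} (f : A -> R) a L : (0 < length L)%nat -> (forall x, In x L -> a <= f x) -> a <= avg f L.
Proof. intros H H1. replace a with (avg (fun _ => a) L).
 - apply avg_le; auto.
 - rewrite avg_sumR, sumR_const. assert (0 < INR (length L)) by (apply lt_0_INR; auto). field; lra. Qed.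

Lemma avg_nonneg {A} (f : A -> R) L : (forall x, In x L -> 0 <= f x) -> 0 <= avg f L.
Proof. intros H. destruct L as [|a L]. - rewrite avg_sumR; simpl. unfold sumR; simpl; lra.
 - apply avg_ge; simpl; auto; lia. Qed.

Lemma choices_len_pos m w : (1 <= w)%nat -> (0 < length (choices m w))%nat.
Proof. intros H. rewrite length_choices. apply Nat.neq_0_lt_0, Nat.pow_nonzero; lia. Qed.

Lemma succ_prob_nonneg ws m r : 0 <= succ_prob ws m r.
Proof. revert m r; induction ws as [|w ws IH]; intros m r; destruct m; simpl; try lra.
 destruct (Nat.leb r w); apply avg_nonneg; intros; [destruct (Nat.eqb _ _); lra| apply IH]. Qed.

Lemma succ_prob_cons_S w ws m r : succ_prob (w :: ws) (S m) r =
  if Nat.leb r w then avg (fun c => if Nat.eqb (singles c r) (S m) then 1 else 0) (choices (S m) w)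
  else avg (fun c => succ_prob ws (S m - singles c w) (r - w)) (choices (S m) w).
Proof. reflexivity. Qed.

Lemma prob_bad_nonneg m w T : 0 <= prob_bad m w T.
Proof. unfold prob_bad. apply avg_nonneg. intros; destruct (Rle_dec _ _); lra. Qed.

Lemma step_lb w ws m r M' P p : (1 <= w)%nat -> (w < r)%nat -> 0 <= P ->
  (forall m', INR m' <= M' -> 1 - P <= succ_prob ws m' (r - w)) ->
  prob_bad m w M' <= p -> 1 - P - p <= succ_prob (w :: ws) m r.
Proof.
  intros Hw Hr HP IH Hp. pose proof (prob_bad_nonneg m w M').
  destruct m as [|m]; [simpl; lra|].
  rewrite succ_prob_cons_S. assert (Hlb : Nat.leb r w = false) by (apply Nat.leb_gt; lia). rewrite Hlb.
  unfold prob_bad in Hp.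
  apply Rle_trans with (avg (fun c => 1 - P - (if Rle_dec (INR (S m - singles c w)) M' then 0 else 1)) (choices (S m) w)).
  - rewrite avg_lin by (apply choices_len_pos; auto). lra.
  - apply avg_le. intros c Hc. destruct (Rle_dec _ _) as [H1|H1].
    + rewrite Rminus_0_r. apply IH; auto.
    + pose proof (succ_prob_nonneg ws (S m - singles c w) (r - w)). lra.
Qed.

Definition lsum (l : list nat) : nat := fold_right Nat.add 0%nat l.

Lemma prefix_lb (pre ws : list nat) (K : nat) (B L : R) :
  1 <= B -> L <= 1 -> Forall (fun x => (1 <= x)%nat) pre ->
  (forall m r, (m <= K)%nat -> B <= INR r -> L <= succ_prob ws m r) ->
  forall m r, (m <= K)%nat -> INR (lsum pre) + B <= INR r -> L <= succ_prob (pre ++ ws) m r.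
Proof.
  intros HB HL Hpre H. induction pre as [|w pre IH]; intros m r Hm Hr.
  - simpl in *. apply H; auto. lra.
  - inversion Hpre; subst. simpl app. destruct m as [|m]; [simpl; lra|].
    assert (Hr2 : INR w + INR (lsum pre) + B <= INR r) by (rewrite <- plus_INR; exact Hr). clear Hr; rename Hr2 into Hr. pose proof (pos_INR (lsum pre)).
    assert (HwR : INR w < INR r) by lra. apply INR_lt in HwR.
    rewrite succ_prob_cons_S. assert (Hlb : Nat.leb r w = false) by (apply Nat.leb_gt; lia). rewrite Hlb.
    apply avg_ge; [apply choices_len_pos; auto|]. intros c Hc. apply IH; auto.
    + lia.
    + rewrite minus_INR by lia. lra.
Qed.


Lemma nfloor_spec y : 0 <= y -> y - 1 < INR (nfloor y) <= y.
Proof.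
  intros Hy. unfold nfloor. destruct (base_Int_part y) as [H1 H2].
  assert (Hz : (0 <= Int_part y)%Z).
  { apply le_IZR. assert (-1 < IZR (Int_part y)) by lra.
    destruct (Z_lt_le_dec (Int_part y) 0) as [l|l]; [|apply IZR_le in l; lra].
    assert (Int_part y <= -1)%Z by lia. apply IZR_le in H0. lra. }
  rewrite INR_IZR_INZ, Z2Nat.id by auto. lra.
Qed.

Lemma pw_S d w f : 1 <= w -> phase_windows d w (S f) = nfloor w :: phase_windows d (w * (1 - d)) f.
Proof. intros H. simpl. destruct (Rle_dec 1 w); [reflexivity| lra]. Qed.

Lemma succ_prob_0 ws r : succ_prob ws 0 r = 1.
Proof. destruct ws; reflexivity. Qed.

Fixpoint tailsum (pr : nat -> R) (t n : nat) : R :=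
  match n with O => pr t | S n' => pr t + tailsum pr (S t) n' end.

Section Phase.
Variables (d W0 : R) (T : nat) (Mth pr : nat -> R).
Hypothesis Hd : 0 < d < 1.
Hypothesis Hw : forall t, (t <= T)%nat -> 3 <= W0 * (1 - d) ^ t.
Hypothesis H1 : forall t, (t < T)%nat -> forall m, INR m <= Mth t ->
  prob_bad m (nfloor (W0 * (1 - d) ^ t)) (Mth (S t)) <= pr t.
Hypothesis H2 : forall m, INR m <= Mth T -> prob_bad m (nfloor (W0 * (1 - d) ^ T)) 0 <= pr T.
Hypothesis Hp : forall t, 0 <= pr t.

Lemma tailsum_nonneg t n : 0 <= tailsum pr t n.
Proof. revert t; induction n; intros t; simpl; [apply Hp|]. pose proof (Hp t); pose proof (IHn (S t)); lra. Qed.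

Lemma phase_lb : forall n t, (t + n = T)%nat -> forall fuel, (n < fuel)%nat ->
  forall w, w = W0 * (1 - d) ^ t -> forall post m r, INR m <= Mth t ->
  w / d + 1 <= INR r -> 1 - tailsum pr t n <= succ_prob (phase_windows d w fuel ++ post) m r.
Proof.
  induction n as [|n IH]; intros t Ht fuel Hf w Hwt post m r Hm Hr.
  - destruct fuel as [|f]; [lia|]. assert (Hw3 : 3 <= w) by (subst; apply Hw; lia).
    rewrite pw_S by lra. simpl app.
    destruct (nfloor_spec w) as [F1 F2]; [lra|].
    assert (Hwd : w <= w / d) by (apply (Rmult_le_reg_r d); [lra|]; unfold Rdiv; rewrite Rmult_assoc, Rinv_l by lra; nra).
    simpl tailsum. replace (1 - pr t) with (1 - 0 - pr t) by ring.
    apply step_lb with (M' := 0).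
    + apply (INR_le 1); change (INR 1) with 1; lra.
    + apply INR_lt. lra.
    + lra.
    + intros m' Hm'. assert (m' = 0%nat) by (destruct m'; [auto| rewrite S_INR in Hm'; pose proof (pos_INR m'); lra]).
      subst m'. rewrite succ_prob_0. lra.
    + assert (t = T) by lia. subst t w. apply H2; auto.
  - destruct fuel as [|f]; [lia|]. assert (Hw3 : 3 <= w) by (subst; apply Hw; lia).
    rewrite pw_S by lra. simpl app.
    destruct (nfloor_spec w) as [F1 F2]; [lra|].
    assert (Hwd : w <= w / d) by (apply (Rmult_le_reg_r d); [lra|]; unfold Rdiv; rewrite Rmult_assoc, Rinv_l by lra; nra).
    simpl tailsum. pose proof (tailsum_nonneg (S t) n).
    replace (1 - (pr t + tailsum pr (S t) n)) with (1 - tailsum pr (S t) n - pr t) by ring.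
    apply step_lb with (M' := Mth (S t)).
    + apply (INR_le 1); change (INR 1) with 1; lra.
    + apply INR_lt. lra.
    + lra.
    + intros m' Hm'. apply IH; auto; try lia.
      * subst w. simpl pow. ring.
      * assert (nfloor w <= r)%nat by (apply INR_le; lra).
        rewrite minus_INR by auto.
        replace (w * (1 - d) / d + 1) with (w / d + 1 - w) by (field; lra). lra.
    + subst w. apply H1; [lia|auto].
Qed.
End Phase.


Lemma pw_ge1 d w f : Forall (fun x => (1 <= x)%nat) (phase_windows d w f).
Proof. revert w; induction f; intros w; simpl; [constructor|].
 destruct (Rle_dec 1 w) as [Hw1|Hw1]; [|constructor]. constructor; auto.
 destruct (nfloor_spec w) as [F1 F2]; [lra|]. assert (0 < nfloor w)%nat by (apply INR_lt; change (INR 0) with 0; lra). lia. Qed.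

Lemma lsum_app l1 l2 : lsum (l1 ++ l2) = (lsum l1 + lsum l2)%nat.
Proof. induction l1; simpl; [reflexivity|]. unfold lsum in *; simpl; rewrite IHl1; lia. Qed.

Lemma pw_sum d w f : 0 < d < 1 -> 0 <= w -> INR (lsum (phase_windows d w f)) <= w / d.
Proof. intros Hd. revert w; induction f; intros w Hw; simpl.
 - unfold lsum; simpl. apply Rmult_le_pos; [lra| left; apply Rinv_0_lt_compat; lra].
 - destruct (Rle_dec 1 w).
   + change (lsum (nfloor w :: phase_windows d (w * (1 - d)) f)) with (nfloor w + lsum (phase_windows d (w * (1 - d)) f))%nat.
     rewrite plus_INR. destruct (nfloor_spec w) as [F1 F2]; [lra|].
     assert (0 <= w * (1 - d)) by nra. pose proof (IHf _ H).
     replace (w / d) with (w + w * (1 - d) / d) by (field; lra). lra.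
   + unfold lsum; simpl. apply Rmult_le_pos; [lra| left; apply Rinv_0_lt_compat; lra].
Qed.

Lemma Forall_flat_map2 (P : nat -> Prop) (g : nat -> list nat) l :
  (forall i, Forall P (g i)) -> Forall P (flat_map g l).
Proof. intros H. induction l; simpl; [constructor|]. apply Forall_app; auto. Qed.

Lemma pre_sum d D n : 0 < d < 1 ->
  INR (lsum (flat_map (fun i => phase_windows d (2 ^ i) D) (seq 1 n))) <= (2 ^ (S n) - 2) / d.
Proof. intros Hd. induction n.
 - simpl. unfold lsum; simpl. replace (2 * 1 - 2) with 0 by ring. unfold Rdiv; rewrite Rmult_0_l; lra.
 - rewrite seq_S, flat_map_app, lsum_app, plus_INR. cbn [flat_map]. rewrite app_nil_r.
   pose proof (pw_sum d (2 ^ (1 + n)) D Hd). assert (0 <= 2 ^ (1 + n)) by (apply pow_le; lra).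
   specialize (H H0). replace (1 + n)%nat with (S n) in H by lia.
   apply Rle_trans with ((2 ^ S n - 2) / d + 2 ^ S n / d); [replace (1 + n)%nat with (S n) by lia; lra|]. right.
   change (2 ^ S (S n)) with (2 * 2 ^ S n). field; lra.
Qed.

Lemma schedule_split d D J : (1 <= J <= D)%nat ->
  schedule d D = flat_map (fun i => phase_windows d (2 ^ i) D) (seq 1 (J - 1)) ++
    (phase_windows d (2 ^ J) D ++ flat_map (fun i => phase_windows d (2 ^ i) D) (seq (S J) (D - J))).
Proof. intros H. unfold schedule.
 assert (E : seq 1 D = seq 1 (J - 1) ++ seq J (S (D - J))).
 { replace J with (1 + (J - 1))%nat at 2 by lia. rewrite <- seq_app. f_equal. lia. }
 rewrite E, flat_map_app. reflexivity. Qed.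


Lemma ln_le_mono x y : 0 < x -> x <= y -> ln x <= ln y.
Proof. intros H [H1|H1]; [left; apply ln_increasing; auto| subst; lra]. Qed.
Lemma pow_exp_ln x n : 0 < x -> x ^ n = exp (INR n * ln x).
Proof. intros H. rewrite <- ln_pow by auto. rewrite exp_ln; auto. apply pow_lt; auto. Qed.
Lemma exp_lt_mono x y : x < y -> exp x < exp y.
Proof. apply exp_increasing. Qed.

Section Params.
Variable d : R.
Hypothesis Hd : 0 < d < 1 / exp 1.

Definition rb := (1 - ln d) / 2.
Definition Aa := 1 - exp (- rb).
Definition aa := 1 - (exp (- rb) + d) / 2.
Definition th := (exp (- rb) - d) / 2.
Definition xx := / aa.
Definition lx := ln xx.
Definition l1 := - ln (1 - d).
Definition lam := l1 / lx.
Definition bet := (1 - lam) / 4.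
Definition gam := 1 - (1 - bet) * lam.

Lemma d_lt1 : d < 1.
Proof. destruct Hd. assert (1 < exp 1) by (pose proof (exp_increasing 0 1 Rlt_0_1) as E; rewrite exp_0 in E; exact E).
 assert (1 / exp 1 < 1) by (apply (Rmult_lt_reg_r (exp 1)); [lra|]; unfold Rdiv; rewrite Rmult_assoc, Rinv_l by lra; lra). lra. Qed.

Lemma lnd_lt : ln d < -1.
Proof. destruct Hd. replace (-1) with (ln (1 / exp 1)).
 - apply ln_increasing; auto.
 - unfold Rdiv; rewrite Rmult_1_l, ln_Rinv, ln_exp by apply exp_pos. ring. Qed.

Lemma rb_gt1 : 1 < rb.
Proof. unfold rb. pose proof lnd_lt. lra. Qed.

Lemma erb_gt_d : d < exp (- rb).
Proof. destruct Hd. rewrite <- (exp_ln d) at 1 by auto. apply exp_increasing. unfold rb. pose proof lnd_lt. lra. Qed.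

Lemma erb_lt1 : exp (- rb) < 1.
Proof. pose proof rb_gt1. pose proof (exp_increasing (- rb) 0) as E; rewrite exp_0 in E; apply E; lra. Qed.

Lemma th_pos : 0 < th.
Proof. unfold th. pose proof erb_gt_d; lra. Qed.

Lemma aa_bounds : 0 < aa < 1 - d.
Proof. unfold aa. pose proof erb_gt_d; pose proof erb_lt1; pose proof d_lt1; destruct Hd; lra. Qed.

Lemma aa_eq : aa = Aa + th.
Proof. unfold aa, Aa, th; field. Qed.

Lemma Aa_nonneg : 0 <= Aa.
Proof. unfold Aa. pose proof erb_lt1; lra. Qed.

Lemma xx_gt1 : 1 < xx.
Proof. unfold xx. destruct aa_bounds. pose proof d_lt1. apply (Rmult_lt_reg_r aa); [lra|]. rewrite Rinv_l by lra. lra. Qed.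

Lemma l1_pos : 0 < l1.
Proof. unfold l1. destruct Hd. pose proof d_lt1. assert (ln (1 - d) < 0); [|lra].
 rewrite <- ln_1. apply ln_increasing; lra. Qed.

Lemma l1_ge_d : d <= l1.
Proof. unfold l1. destruct Hd. pose proof d_lt1. assert (ln (1 - d) <= - d); [|lra].
 rewrite <- (ln_exp (- d)). apply ln_le_mono; [lra|]. pose proof (exp_ineq1_le (- d)). lra. Qed.

Lemma l1_lt_lx : l1 < lx.
Proof. unfold l1, lx, xx. destruct aa_bounds. pose proof d_lt1. destruct Hd.
 rewrite ln_Rinv by auto. apply Ropp_lt_contravar. apply ln_increasing; lra. Qed.

Lemma lam_bounds : 0 < lam < 1.
Proof. unfold lam. pose proof l1_pos; pose proof l1_lt_lx. split.
 - apply Rdiv_lt_0_compat; lra.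
 - apply (Rmult_lt_reg_r lx); [lra|]. unfold Rdiv; rewrite Rmult_assoc, Rinv_l by lra. lra. Qed.

Lemma bet_pos : 0 < bet.
Proof. unfold bet; pose proof lam_bounds; lra. Qed.

Lemma bet_lt : bet < 1 / 4.
Proof. unfold bet; pose proof lam_bounds; lra. Qed.

Lemma gam_ge : 4 * bet <= gam.
Proof. unfold gam, bet. pose proof lam_bounds. nra. Qed.

End Params.


Section Main.
Variable d : R.
Hypothesis Hd : 0 < d < 1 / exp 1.

Definition Kbig := 2 * rb d / (rb d - 1) + 3.
Definition C0 := (1 + rb d) / th d ^ 2.
Definition Cfin := C0 * xx d / (xx d - 1) + 2 / (1 - d).

Lemma tailsum_eq (pr : nat -> R) (T : nat) (k x : R) :
  0 < k -> 1 < x ->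
  (forall t, (t < T)%nat -> pr t = C0 / k * x ^ t) ->
  forall n t, (t + n = T)%nat -> tailsum pr t n = C0 / k * (x ^ T - x ^ t) / (x - 1) + pr T.
Proof.
  intros Hk Hx Hpr. induction n; intros t Ht.
  - simpl. replace t with T by lia. field. lra.
  - simpl. rewrite IHn by lia. rewrite Hpr by lia. simpl pow. field. lra.
Qed.

Lemma main_bound (k : nat) : (2 <= k)%nat -> Kbig <= (1 - d) * exp (gam d * ln (INR k)) ->
  1 - Cfin * exp (- bet d * ln (INR k)) <= all_delivered_prob d k.
Proof.
  intros Hk2 Hbig.
  pose proof (d_lt1 d Hd) as Hd1. destruct Hd as [Hd0 _].
  pose proof (rb_gt1 d Hd) as Hrb. pose proof (th_pos d Hd) as Hth. pose proof (aa_bounds d Hd) as Haa.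
  pose proof (xx_gt1 d Hd) as Hxx. pose proof (l1_pos d Hd) as Hl1. pose proof (l1_lt_lx d Hd) as Hlx.
  pose proof (lam_bounds d Hd) as Hlam. pose proof (bet_pos d Hd) as Hbet. pose proof (gam_ge d Hd) as Hgam. pose proof (bet_lt d Hd) as Hbet2.
  pose proof (aa_eq d) as Haeq. pose proof (Aa_nonneg d Hd) as HA.
  set (rbv := rb d) in *. set (a := aa d) in *. set (A := Aa d) in *. set (t0 := th d) in *.
  set (x := xx d) in *. set (lxv := lx d) in *. set (l1v := l1 d) in *.
  set (lamv := lam d) in *. set (b := bet d) in *. set (g := gam d) in *.
  assert (HkR : 2 <= INR k) by (apply (le_INR 2); lia).
  set (Lk := ln (INR k)) in *.
  assert (HLk : 0 < Lk) by (unfold Lk; rewrite <- ln_1; apply ln_increasing; lra).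
  assert (HkL : INR k = exp Lk) by (unfold Lk; rewrite exp_ln; lra).
  set (J := Nat.log2_up k).
  destruct (Nat.log2_up_spec k) as [HJ1 HJ2]; [lia|]. fold J in HJ1, HJ2.
  assert (HJ0 : (1 <= J)%nat) by (destruct J; [simpl in HJ2; lia| lia]).
  assert (HJ3 : (2 ^ J <= 2 * k - 1)%nat).
  { replace J with (S (Nat.pred J)) by lia. rewrite Nat.pow_succ_r'. revert HJ1. generalize (2 ^ Nat.pred J)%nat. intros; lia. }
  set (W0 := 2 ^ J).
  assert (HW0 : W0 = INR (2 ^ J)) by (unfold W0; rewrite pow_INR; reflexivity).
  assert (HW0a : INR k <= W0) by (rewrite HW0; apply le_INR; auto).
  assert (HW0b : W0 <= 2 * INR k - 1).
  { rewrite HW0. apply le_INR in HJ3. rewrite minus_INR in HJ3 by lia. rewrite mult_INR in HJ3. simpl in HJ3. lra. }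
  set (y := (1 - b) * Lk / lxv).
  assert (Hy0 : 0 <= y) by (unfold y; apply Rmult_le_pos; [nra| left; apply Rinv_0_lt_compat; lra]).
  set (T := S (nfloor y)).
  assert (HT : y < INR T <= y + 1) by (unfold T; rewrite S_INR; destruct (nfloor_spec y Hy0); lra).
  assert (Hlam_eq : lamv = l1v / lxv) by reflexivity.
  assert (Hg_eq : g = 1 - (1 - b) * lamv) by reflexivity.
  assert (Hx_eq : x = / a) by reflexivity.
  assert (Hlx_eq : lxv = ln x) by reflexivity.
  assert (Hl1_eq : l1v = - ln (1 - d)) by reflexivity.
  assert (Hylx : y * lxv = (1 - b) * Lk) by (unfold y; field; lra).
  assert (Hyl1 : y * l1v = (1 - b) * lamv * Lk) by (unfold y; rewrite Hlam_eq; field; lra).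
  set (KT := INR k * (1 - d) ^ T).
  assert (F1 : (1 - d) * exp (g * Lk) <= KT).
  { unfold KT. rewrite pow_exp_ln by lra. rewrite HkL.
    replace (ln (1 - d)) with (- l1v) by lra.
    apply Rle_trans with (exp Lk * exp (- ((y + 1) * l1v))).
    - rewrite <- exp_plus. replace (1 - d) with (exp (- l1v)) by (rewrite Hl1_eq, Ropp_involutive, exp_ln; lra).
      rewrite <- exp_plus. apply exp_le_mono. rewrite Hg_eq. nra.
    - apply Rmult_le_compat_l; [left; apply exp_pos|]. apply exp_le_mono. nra. }
  assert (HKT : Kbig <= KT) by lra.
  assert (HKbig : 2 * rbv / (rbv - 1) + 3 = Kbig) by reflexivity.
  assert (Hrbdiv : 0 < 2 * rbv / (rbv - 1)) by (apply Rdiv_lt_0_compat; lra).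
  set (Mth := fun t => INR k * a ^ t).
  assert (F2 : Mth T <= exp (b * Lk)).
  { unfold Mth. rewrite pow_exp_ln by lra. rewrite HkL.
    replace (ln a) with (- lxv) by (rewrite Hlx_eq, Hx_eq, ln_Rinv by lra; ring).
    rewrite <- exp_plus. apply exp_le_mono. nra. }
  assert (F3 : x ^ T <= x * exp ((1 - b) * Lk)).
  { rewrite pow_exp_ln by lra. rewrite <- Hlx_eq.
    assert (Ex : x = exp lxv) by (rewrite Hlx_eq, exp_ln; lra). rewrite Ex at 1. rewrite <- exp_plus.
    apply exp_le_mono. nra. }
  assert (HKT3 : 3 <= KT) by lra.
  assert (Hpow_dec : forall t, (t <= T)%nat -> (1 - d) ^ T <= (1 - d) ^ t).
  { intros t Ht. replace T with (t + (T - t))%nat by lia. rewrite pow_add.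
    assert (0 <= (1 - d) ^ t) by (apply pow_le; lra).
    assert ((1 - d) ^ (T - t) <= 1) by (apply pow_le_one; lra). nra. }
  assert (HKt : forall t, (t <= T)%nat -> KT <= INR k * (1 - d) ^ t).
  { intros t Ht. unfold KT. apply Rmult_le_compat_l; [lra| auto]. }
  assert (HWt : forall t, (t <= T)%nat -> INR k * (1 - d) ^ t <= W0 * (1 - d) ^ t).
  { intros t Ht. apply Rmult_le_compat_r; [apply pow_le; lra| auto]. }
  assert (Hw : forall t, (t <= T)%nat -> 3 <= W0 * (1 - d) ^ t).
  { intros t Ht. specialize (HKt t Ht). specialize (HWt t Ht). lra. }
  assert (HMpos : forall t, 0 < Mth t).
  { intros t. unfold Mth. apply Rmult_lt_0_compat; [lra| apply pow_lt; lra]. }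
  assert (HMK : forall t, Mth t <= INR k * (1 - d) ^ t).
  { intros t. unfold Mth. apply Rmult_le_compat_l; [lra|]. apply pow_incr; lra. }
  set (pr := fun t => if Nat.ltb t T then C0 / Mth t else Mth T ^ 2 / (KT - 1)).
  assert (HC0 : 0 < C0) by (unfold C0; apply Rdiv_lt_0_compat; [fold rbv; lra| apply pow_lt; fold t0; lra]).
  assert (C0_eq : C0 = (1 + rbv) / t0 ^ 2) by reflexivity.
  assert (Hp : forall t, 0 <= pr t).
  { intros t. unfold pr. destruct (Nat.ltb t T).
    - left; apply Rdiv_lt_0_compat; auto.
    - apply Rmult_le_pos; [apply pow2_ge_0| left; apply Rinv_0_lt_compat; lra]. }
  assert (H1 : forall t, (t < T)%nat -> forall m, INR m <= Mth t ->
      prob_bad m (nfloor (W0 * (1 - d) ^ t)) (Mth (S t)) <= pr t).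
  { intros t Ht m Hm. unfold pr. assert (Nat.ltb t T = true) as -> by (apply Nat.ltb_lt; auto).
    set (wv := W0 * (1 - d) ^ t). set (wn := nfloor wv).
    assert (Hwv : 3 <= wv) by (apply Hw; lia).
    destruct (nfloor_spec wv) as [N1 N2]; [lra|]. fold wn in N1, N2.
    set (Kt := INR k * (1 - d) ^ t) in *.
    assert (HKt1 : KT <= Kt) by (apply HKt; lia). assert (HKt2 : Kt <= wv) by (apply HWt; lia).
    assert (Hwn : (2 <= wn)%nat) by (assert (1 < wn)%nat by (apply INR_lt; change (INR 1) with 1; lra); lia).
    set (M := Mth t) in *. assert (HM0 : 0 < M) by apply HMpos. assert (HMK' : M <= Kt) by apply HMK.
    assert (Hrbk : Kt <= rbv * (Kt - 2)).
    { assert (2 * rbv / (rbv - 1) <= Kt) by lra.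
      assert (2 * rbv <= (rbv - 1) * Kt); [|lra].
      apply (Rmult_le_reg_r (/ (rbv - 1))); [apply Rinv_0_lt_compat; lra|].
      replace ((rbv - 1) * Kt * / (rbv - 1)) with Kt by (field; lra). exact H. }
    assert (HmW : INR m <= rbv * (INR wn - 1)).
    { assert (rbv * (Kt - 2) <= rbv * (INR wn - 1)) by (apply Rmult_le_compat_l; lra). lra. }
    assert (HMW : M <= rbv * INR wn).
    { assert (rbv * (Kt - 2) <= rbv * INR wn) by (apply Rmult_le_compat_l; lra). lra. }
    assert (HSt : Mth (S t) = a * M) by (unfold M, Mth; simpl pow; ring).
    rewrite HSt.
    eapply Rle_trans; [apply window_cheb with (d := t0 * M)|].
    - auto.
    - apply Rmult_lt_0_compat; lra.
    - pose proof (mean_bound1 wn m rbv Hwn HmW). replace (1 - exp (- rbv)) with A in H by reflexivity.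
      assert (INR m * A <= M * A) by (apply Rmult_le_compat_r; lra). rewrite Haeq, Rmult_plus_distr_r. lra.
    - assert (HwnR : 0 < INR wn) by lra.
      assert (INR m ^ 2 / INR wn <= M ^ 2 / INR wn).
      { unfold Rdiv. apply Rmult_le_compat_r; [left; apply Rinv_0_lt_compat; lra|]. pose proof (pos_INR m). apply pow_incr; lra. }
      assert (M ^ 2 / INR wn <= rbv * M).
      { apply (Rmult_le_reg_r (INR wn)); auto. unfold Rdiv; rewrite Rmult_assoc, Rinv_l by lra. simpl pow. rewrite Rmult_1_r, Rmult_1_r.
        assert (M * M <= M * (rbv * INR wn)) by (apply Rmult_le_compat_l; lra). lra. }
      assert (HtM : 0 < (t0 * M) ^ 2) by (apply pow_lt; apply Rmult_lt_0_compat; lra).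
      apply Rle_trans with ((M + rbv * M) / (t0 * M) ^ 2).
      + unfold Rdiv. apply Rmult_le_compat_r; [left; apply Rinv_0_lt_compat; auto| lra].
      + right. rewrite C0_eq. field. split; lra. }
  assert (H2 : forall m, INR m <= Mth T -> prob_bad m (nfloor (W0 * (1 - d) ^ T)) 0 <= pr T).
  { intros m Hm. unfold pr. rewrite Nat.ltb_irrefl.
    set (wv := W0 * (1 - d) ^ T). set (wn := nfloor wv).
    assert (Hwv : 3 <= wv) by (apply Hw; lia).
    destruct (nfloor_spec wv) as [N1 N2]; [lra|]. fold wn in N1, N2.
    assert (HKt2 : KT <= wv) by (apply (Rle_trans _ _ _ (HKt T (le_n T))), HWt; lia).
    assert (Hwn : (2 <= wn)%nat) by (assert (1 < wn)%nat by (apply INR_lt; change (INR 1) with 1; lra); lia).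
    eapply Rle_trans; [apply window_markov; auto|].
    eapply Rle_trans; [apply mean_bound2; auto|].
    pose proof (pos_INR m). pose proof (HMpos T).
    assert (INR m ^ 2 <= Mth T ^ 2) by (apply pow_incr; lra).
    unfold Rdiv. apply Rmult_le_compat; [apply pow2_ge_0| left; apply Rinv_0_lt_compat; lra| auto|].
    apply Rinv_le_contravar; lra. }
  set (D := deadline d k).
  assert (HD : 4 * (1 + 1 / d) * INR k - 1 < INR D).
  { unfold D, deadline. destruct (nfloor_spec (4 * (1 + 1 / d) * INR k)) as [N1 N2]; [|lra].
    assert (0 < 1 / d) by (apply Rdiv_lt_0_compat; lra). nra. }
  assert (Hdinv : 1 < 1 / d).
  { apply (Rmult_lt_reg_r d); [lra|]. unfold Rdiv; rewrite Rmult_assoc, Rinv_l by lra. lra. }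
  assert (HkD : (k <= D)%nat) by (apply INR_le; nra).
  assert (HJk : (J <= k)%nat) by (pose proof (Nat.pow_gt_lin_r 2 (Nat.pred J)); lia).
  assert (HTD : (T < D)%nat).
  { apply INR_lt. assert (HLkk : Lk < INR k) by (rewrite HkL; pose proof (exp_ineq1_le Lk); lra).
    pose proof (l1_ge_d d (conj Hd0 (proj2 Hd))) as Hl1d. fold l1v in Hl1d.
    assert (y <= INR k / d).
    { unfold y. apply Rle_trans with (Lk / lxv).
      - unfold Rdiv. apply Rmult_le_compat_r; [left; apply Rinv_0_lt_compat; lra| nra].
      - unfold Rdiv. apply Rle_trans with (Lk * / d).
        + apply Rmult_le_compat_l; [lra|]. apply Rinv_le_contravar; lra.
        + apply Rmult_le_compat_r; [left; apply Rinv_0_lt_compat; lra| lra]. }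
    assert (INR k / d = INR k * (1 / d)) by (unfold Rdiv; ring). nra. }
  unfold all_delivered_prob. fold D.
  rewrite (schedule_split d D J) by lia.
  set (pre := flat_map (fun i => phase_windows d (2 ^ i) D) (seq 1 (J - 1))).
  set (post := flat_map (fun i => phase_windows d (2 ^ i) D) (seq (S J) (D - J))).
  pose proof (tailsum_nonneg pr Hp 0 T) as Hts0.
  assert (Hmain : 1 - tailsum pr 0 T <= succ_prob (pre ++ (phase_windows d (2 ^ J) D ++ post)) k D).
  { apply (prefix_lb pre _ k (W0 / d + 1)).
    - assert (0 <= W0 / d) by (apply Rmult_le_pos; [lra| left; apply Rinv_0_lt_compat; lra]). lra.
    - lra.
    - unfold pre. apply Forall_flat_map. apply Forall_forall. intros; apply pw_ge1.
    - intros m r Hm Hr. apply (phase_lb d W0 T Mth pr (conj Hd0 Hd1) Hw H1 H2 Hp T 0 (eq_refl _) D HTD).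
      + simpl. unfold W0. ring.
      + unfold Mth. simpl. rewrite Rmult_1_r. apply le_INR; auto.
      + auto.
    - lia.
    - pose proof (pre_sum d D (J - 1) (conj Hd0 Hd1)) as Hps. fold pre in Hps.
      replace (S (J - 1)) with J in Hps by lia. fold W0 in Hps.
      apply Rle_trans with ((W0 - 2) / d + (W0 / d + 1)); [lra|].
      replace ((W0 - 2) / d + (W0 / d + 1)) with ((2 * W0 - 2) * (1 / d) + 1) by (field; lra).
      assert ((2 * W0 - 2) * (1 / d) <= (4 * INR k - 4) * (1 / d)) by (apply Rmult_le_compat_r; lra).
      nra. }
  eapply Rle_trans; [|exact Hmain]. clear Hmain.
  assert (Hts : tailsum pr 0 T = C0 / INR k * (x ^ T - x ^ 0) / (x - 1) + pr T).
  { apply (tailsum_eq pr T (INR k) x); try lra; try lia.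
    intros t Ht. unfold pr. assert (Nat.ltb t T = true) as -> by (apply Nat.ltb_lt; auto).
    unfold Mth. rewrite Hx_eq, pow_inv. field. split; [apply pow_nonzero|]; lra. }
  rewrite Hts. unfold pr at 1. rewrite Nat.ltb_irrefl.
  assert (B1 : C0 / INR k * (x ^ T - x ^ 0) / (x - 1) <= C0 * x / (x - 1) * exp (- b * Lk)).
  { simpl pow at 2. assert (0 < x - 1) by lra.
    apply Rle_trans with (C0 / INR k * (x * exp ((1 - b) * Lk)) / (x - 1)).
    - unfold Rdiv. apply Rmult_le_compat_r; [left; apply Rinv_0_lt_compat; lra|].
      apply Rmult_le_compat_l; [apply Rmult_le_pos; [lra|left; apply Rinv_0_lt_compat; lra]|]. lra.
    - right. rewrite HkL. replace (- b * Lk) with ((1 - b) * Lk + - Lk) by ring. rewrite exp_plus, exp_Ropp.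
      field. repeat split; try lra; apply Rgt_not_eq, exp_pos. }
  assert (B2 : Mth T ^ 2 / (KT - 1) <= 2 / (1 - d) * exp (- b * Lk)).
  { assert (0 < Mth T) by apply HMpos.
    assert (Hm2 : Mth T ^ 2 <= exp (b * Lk) ^ 2) by (apply pow_incr; lra).
    assert (HK2 : (1 - d) * exp (g * Lk) / 2 <= KT - 1) by lra.
    assert (0 < (1 - d) * exp (g * Lk)) by (apply Rmult_lt_0_compat; [lra| apply exp_pos]).
    apply Rle_trans with (exp (b * Lk) ^ 2 / ((1 - d) * exp (g * Lk) / 2)).
    - unfold Rdiv. apply Rmult_le_compat; [apply pow2_ge_0| left; apply Rinv_0_lt_compat; lra| auto|].
      apply Rinv_le_contravar; lra.
    - replace (exp (b * Lk) ^ 2 / ((1 - d) * exp (g * Lk) / 2)) with (2 / (1 - d) * exp ((2 * b - g) * Lk)).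
      + apply Rmult_le_compat_l; [apply Rmult_le_pos; [lra| left; apply Rinv_0_lt_compat; lra]|].
        apply exp_le_mono. nra.
      + replace ((2 * b - g) * Lk) with (b * Lk + b * Lk + - (g * Lk)) by ring.
        rewrite !exp_plus, exp_Ropp. field. repeat split; try lra; apply Rgt_not_eq, exp_pos. }
  unfold Cfin. fold x. lra.
Qed.
End Main.


Theorem mainTheorem3 :
  forall delta : R, 0 < delta < 1 / exp 1 ->
  exists c : R, 0 < c /\
  exists k0 : nat, forall k : nat, (k0 <= k)%nat ->
    all_delivered_prob delta k >= 1 - 1 / Rpower (INR k) c.
Proof.
  intros d Hd.
  pose proof (d_lt1 d Hd) as Hd1. pose proof (bet_pos d Hd) as Hb. pose proof (gam_ge d Hd) as Hg.
  pose proof (rb_gt1 d Hd) as Hrb. pose proof (th_pos d Hd) as Hth. pose proof (xx_gt1 d Hd) as Hxx.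
  assert (HK : 0 < Kbig d).
  { unfold Kbig. assert (0 < 2 * rb d / (rb d - 1)) by (apply Rdiv_lt_0_compat; lra). lra. }
  assert (HC : 0 < Cfin d).
  { unfold Cfin, C0. assert (0 < (1 + rb d) / th d ^ 2) by (apply Rdiv_lt_0_compat; [lra| apply pow_lt; lra]).
    assert (0 < xx d / (xx d - 1)) by (apply Rdiv_lt_0_compat; lra).
    assert (0 < 2 / (1 - d)) by (apply Rdiv_lt_0_compat; lra). nra. }
  exists (bet d / 2). split; [lra|].
  set (L1 := ln (Kbig d / (1 - d)) / gam d).
  set (L2 := ln (Cfin d) / (bet d / 2)).
  set (Lm := Rmax L1 (Rmax L2 1)).
  exists (max 2 (S (nfloor (exp Lm)))).
  intros k Hk.
  assert (Hk2 : (2 <= k)%nat) by lia.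
  assert (HkR : 2 <= INR k) by (apply (le_INR 2); lia).
  assert (Hke : exp Lm <= INR k).
  { destruct (nfloor_spec (exp Lm)) as [N1 N2]; [left; apply exp_pos|].
    assert (INR (S (nfloor (exp Lm))) <= INR k) by (apply le_INR; lia). rewrite S_INR in H. lra. }
  set (Lk := ln (INR k)).
  assert (HLm : Lm <= Lk) by (unfold Lk; rewrite <- (ln_exp Lm); apply ln_le_mono; [apply exp_pos| auto]).
  assert (HL1 : L1 <= Lk) by (pose proof (Rmax_l L1 (Rmax L2 1)); fold Lm in H; lra).
  assert (HL2 : L2 <= Lk) by (pose proof (Rmax_r L1 (Rmax L2 1)); pose proof (Rmax_l L2 1); fold Lm in H; lra).
  assert (Hgp : 0 < gam d) by lra.
  assert (Hbig : Kbig d <= (1 - d) * exp (gam d * Lk)).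
  { assert (ln (Kbig d / (1 - d)) <= gam d * Lk).
    { unfold L1 in HL1. apply (Rmult_le_compat_l (gam d)) in HL1; [|lra].
      replace (gam d * (ln (Kbig d / (1 - d)) / gam d)) with (ln (Kbig d / (1 - d))) in HL1 by (field; lra). lra. }
    apply exp_le_mono in H. rewrite exp_ln in H by (apply Rdiv_lt_0_compat; lra).
    apply (Rmult_le_compat_l (1 - d)) in H; [|lra].
    replace ((1 - d) * (Kbig d / (1 - d))) with (Kbig d) in H by (field; lra). lra. }
  assert (HCf : Cfin d <= exp (bet d / 2 * Lk)).
  { assert (ln (Cfin d) <= bet d / 2 * Lk).
    { unfold L2 in HL2. apply (Rmult_le_compat_l (bet d / 2)) in HL2; [|lra].
      replace (bet d / 2 * (ln (Cfin d) / (bet d / 2))) with (ln (Cfin d)) in HL2 by (field; lra). lra. }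
    apply exp_le_mono in H. rewrite exp_ln in H by lra. lra. }
  pose proof (main_bound d Hd k Hk2 Hbig) as Hm. fold Lk in Hm.
  apply Rle_ge. eapply Rle_trans; [|exact Hm].
  unfold Rpower. fold Lk.
  assert (Cfin d * exp (- bet d * Lk) <= exp (bet d / 2 * Lk) * exp (- bet d * Lk))
    by (apply Rmult_le_compat_r; [left; apply exp_pos| auto]).
  rewrite <- exp_plus in H. replace (bet d / 2 * Lk + - bet d * Lk) with (- (bet d / 2 * Lk)) in H by field.
  rewrite exp_Ropp in H. unfold Rdiv. rewrite Rmult_1_l. lra.
Qed.
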